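(* Let $m_{\max}$ be the maximum covering number of the compact query space $\mathcal{X}$ at radius $\epsilon$, so $m_{\max}\le(D\sqrt{d_e}/\epsilon)^{d_e}$ with $D$ the diameter. The total number of cache switches triggered by CLCB-SC-LS-Cont up to horizon $T$ satisfies $$\mathbb{E}\Big[\sum_{u\in\mathcal{S}_T}\tau_u(T)\Big]\le\mathcal{O}(m_{\max}\log\log T),\qquad\mathbb{E}[\tau_f(T)]\le\mathcal{O}(\log\log T).$$
   Context: CLCB-SC-LS-Cont (radius $\epsilon$, horizon $T$) maintains a growing set of centers $\mathcal{S}_t\subset\mathcal{X}\subset\mathbb{R}^{d_e}$: an arriving query farther than $\epsilon$ from all centers becomes a new center, otherwise it is mapped to its nearest center; $m_t=|\mathcal{S}_t|$. Each center $u$ has a local stage index $\tau_u$ (starting at 1); $\mathcal{T}(u,\tau)$ is the set of rounds in stage $\tau$ of $u$ at which the LLM was queried on a query mapped to $u$; stage $\tau_u$ ends and $\tau_u$ increases by one when $|\mathcal{T}(u,\tau_u)|\ge1+\sqrt{\frac{T}{m_t}\sum_{\tau<\tau_u}|\mathcal{T}(u,\tau)|}$. A global stage index $\tau_f$ with sets $\mathcal{T}(f,\tau)$ of all arrival rounds in stage $\tau$ increases when $|\mathcal{T}(f,\tau_f)|\ge1+\sqrt{T\sum_{\tau<\tau_f}|\mathcal{T}(f,\tau)|}$. Cache switches occur exactly at stage increments (and at center creations). $\tau_u(T),\tau_f(T)$ are the stage indices at time $T$. *)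

(* Defs.v *)
From HB Require Import structures.
From mathcomp Require Import all_boot all_order all_algebra.
From mathcomp Require Import all_classical all_reals all_analysis.
Set Implicit Arguments. Unset Strict Implicit. Unset Printing Implicit Defensive.
Import Order.TTheory GRing.Theory Num.Theory.
Local Open Scope ring_scope.

Section CLCB.
Variables (R : realType) (d : nat).

Definition point := 'rV[R]_d.

Definition edist (x y : point) : R :=
  Num.sqrt (\sum_(i < d) (x ord0 i - y ord0 i) ^+ 2).

Definition eps_separated (X : set point) (eps : R) (s : seq point) : Prop :=
  uniq s /\ (forall x, x \in s -> X x) /\
  (forall x y, x \in s -> y \in s -> x != y -> eps < edist x y).

(* m is the maximum number of epsilon-separated points of X: this is the
   maximal possible number of centers created by the algorithm, i.e. m_max. *)
Definition is_max_cover_number (X : set point) (eps : R) (m : nat) : Prop :=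
  (exists s, eps_separated X eps s /\ size s = m) /\
  (forall s, eps_separated X eps s -> (size s <= m)%N).

(* index of the nearest center in cs (first one in case of ties) *)
Definition nearest (cs : seq point) (x : point) : nat :=
  foldl (fun best j =>
           if edist x (nth 0 cs j) < edist x (nth 0 cs best) then j else best)
        0%N (iota 0 (size cs)).

(* State of the switching bookkeeping of CLCB-SC-LS-Cont.
   Centers are identified by their creation index 0,1,...,m_t - 1. *)
Record state := State {
  centers : seq point;
  lstage  : nat -> nat;
  lcur    : nat -> nat;         (* |T(u, tau_u)| *)
  lprev   : nat -> nat;         (* sum_{tau < tau_u} |T(u, tau)| *)
  gstage  : nat;
  gcur    : nat;                (* |T(f, tau_f)| *)
  gprev   : nat                 (* sum_{tau < tau_f} |T(f, tau)| *)
}.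

Definition init_state : state :=
  State [::] (fun _ => 1%N) (fun _ => 0%N) (fun _ => 0%N) 1%N 0%N 0%N.

Definition upd (f : nat -> nat) (i v : nat) : nat -> nat :=
  fun j => if j == i then v else f j.

(* One round: query x arrives; q says whether the LLM was queried. *)
Definition step (eps : R) (T : nat) (st : state) (x : point) (q : bool)
  : state :=
  let cs := centers st in
  let isnew := all (fun c => eps < edist x c) cs in
  let cs' := if isnew then rcons cs x else cs in
  let i := if isnew then size cs else nearest cs x in
  let m := size cs' in
  let c := (lcur st i + q)%N in
  let lend := (1 + Num.sqrt ((T%:R / m%:R) * (lprev st i)%:R) <= c%:R :> R) in
  let gc := (gcur st).+1 in
  let gend := (1 + Num.sqrt (T%:R * (gprev st)%:R) <= gc%:R :> R) in
  State cs'
    (upd (lstage st) i (lstage st i + lend)%N)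
    (upd (lcur st) i (if lend then 0%N else c))
    (upd (lprev st) i (if lend then (lprev st i + c)%N else lprev st i))
    (gstage st + gend)%N
    (if gend then 0%N else gc)
    (if gend then (gprev st + gc)%N else gprev st).

Fixpoint run (eps : R) (T : nat) (xs : nat -> point) (qs : nat -> bool)
  (t : nat) : state :=
  match t with
  | 0 => init_state
  | t'.+1 => step eps T (run eps T xs qs t') (xs t') (qs t')
  end.

Definition total_local_stages eps T xs qs : nat :=
  let st := run eps T xs qs T in
  (\sum_(u < size (centers st)) lstage st u)%N.

Definition global_stage eps T xs qs : nat := gstage (run eps T xs qs T).

End CLCB.

(* Main.v *)
Require Import Defs.
From HB Require Import structures.
From mathcomp Require Import all_boot all_order all_algebra.
From mathcomp Require Import all_classical all_reals all_analysis.
From mathcomp Require Import lra zify.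
From mathcomp Require Import measurable_realfun.
Import Order.TTheory GRing.Theory Num.Theory numFieldTopology.Exports numFieldNormedType.Exports.
Definition Inv (T j M s L : nat) : Prop :=
  exists p1 p2, s = 1 + p1 + p2 /\ p1 <= j.+2 /\ p2 * T <= M * L /\
   (M * L < T -> p2 = 0 /\ p1 <= j.+1 /\ (p1 = 0 -> L = 0) /\
     (0 < p1 -> T ^ (2 ^ p1.-1) * M <= T * (M * L) ^ (2 ^ p1.-1))).

Lemma Inv_init T j M : Inv T j M 1 0.
Proof. exists 0, 0; rewrite !muln0 mul0n; split => //; split => //. Qed.

Lemma Inv_bound T j M s L : Inv T j M s L -> s * T <= j.+3 * T + M * L.
Proof.
case=> p1 [p2 [-> [h1 [h2 _]]]].
have : p1 * T <= j.+2 * T by apply: leq_mul.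
rewrite !mulnDl. lia.
Qed.

Lemma sq_le (a b : nat) : a * a <= b * b -> a <= b.
Proof. move=> h; case: (leqP a b) => // ba. have := ltn_mul ba ba. lia. Qed.

Lemma final_contra T x y z : T * x <= z * z -> z <= y -> T < 2 * x -> x + y < T -> False.
Proof.
move=> h zy h2 h3.
case: (leqP y x) => yx; last by lia.
have e1 : z * z <= x * y by apply: leq_mul; lia.
have e2 : (x + y).+1 * x <= T * x by apply: leq_mul.
have x0 : 0 < x by lia.
nia.
Qed.

Lemma Inv_step T j M s L c : 0 < M -> 0 < T -> T < 2 ^ (2 ^ j) -> 0 < c ->
  T * L <= (c.-1) ^ 2 * M -> Inv T j M s L -> Inv T j M s.+1 (L + c).
Proof.
move=> M0 T0 Tj c0 hc [p1 [p2 [-> [h1 [h2 h3]]]]].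
have hcM : T * (M * L) <= (M * c.-1) * (M * c.-1).
  have := leq_mul (leqnn M) hc.
  have -> : M * (T * L) = T * (M * L) by lia.
  have -> : M * (c.-1 ^ 2 * M) = (M * c.-1) * (M * c.-1) by rewrite expnS expn1; lia.
  by [].
have zy : M * c.-1 <= M * c by apply: leq_mul; lia.
case: (leqP T (M * L)) => hML.
- have TMc : T <= M * c.
    have : T * T <= (M * c.-1) * (M * c.-1).
      exact: (leq_trans (leq_mul (leqnn T) hML)).
    move=> /sq_le; lia.
  exists p1, p2.+1; split; first by lia.
  split => //; split.
    rewrite mulSn mulnDr. lia.
  move=> hlt; exfalso; rewrite mulnDr in hlt; lia.
- have [p20 [hp1 [hp10 hpow]]] := h3 hML.
  subst p2.
  exists p1.+1, 0; split; first by lia.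
  split; first by [].
  split; first by rewrite mul0n.
  move=> hlt; split => //.
  case: (posnP p1) => [p10 | p1pos].
  + subst p1; rewrite hp10 //= add0n; split => //; split => // _.
    rewrite expn0 !expn1. by rewrite leq_mul2l leq_pmulr ?orbT.
  + set n := 2 ^ p1.-1.
    have n0 : 0 < n by rewrite /n expn_gt0.
    have hn : 2 ^ (p1.+1).-1 = n * 2 by rewrite /n /= -expnSr prednK.
    have hpw := hpow p1pos; rewrite -/n in hpw.
    have key : T ^ (n * 2) * M <= T * (M * (L + c)) ^ (n * 2).
      have A : T ^ n * (M * L) ^ n <= (M * (L + c)) ^ (n * 2).
        rewrite -expnMn [n * 2]mulnC expnM.
        rewrite leq_exp2r //.
        apply: (leq_trans hcM).
        have : M * c.-1 <= M * (L + c) by apply: leq_mul; lia.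
        move=> e; rewrite expnS expn1; exact: leq_mul.
      have B : T ^ (n * 2) * M = T ^ n * (T ^ n * M) by rewrite expnM [(T ^ n) ^ 2]expnS expn1 mulnA.
      rewrite B.
      apply: (leq_trans (leq_mul (leqnn _) hpw)).
      rewrite mulnCA. by rewrite leq_mul2l A orbT.
    split; last by split => // _; rewrite hn.
    case: (ltnP p1 j.+1) => // hj; exfalso.
    have pj : p1 = j.+1 by apply/eqP; rewrite eqn_leq hj hp1.
    have nj : n = 2 ^ j by rewrite /n pj.
    have h2x : T < 2 * (M * L).
      case: (ltnP T (2 * (M * L))) => // hle; exfalso.
      have e1 : (2 * (M * L)) ^ n <= T ^ n by rewrite leq_exp2r.
      rewrite expnMn in e1.
      have e3 : T < 2 ^ n by rewrite nj.
      have Tn : 0 < T ^ n by rewrite expn_gt0 T0.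
      have e4 : T ^ n * T < T ^ n * 2 ^ n by rewrite ltn_pmul2l.
      have e5 : T ^ n * 2 ^ n <= T ^ n * M * 2 ^ n.
        rewrite leq_mul2r leq_pmulr ?orbT //.
      have e6 : T ^ n * M * 2 ^ n <= T * (M * L) ^ n * 2 ^ n by rewrite leq_mul2r hpw orbT.
      have e7 : T * (M * L) ^ n * 2 ^ n <= T * T ^ n.
        rewrite -mulnA leq_mul2l; apply/orP; right; by rewrite mulnC.
      have := leq_trans e4 (leq_trans e5 (leq_trans e6 e7)).
      by rewrite mulnC ltnn.
    have hx : M * L + M * c < T by rewrite -mulnDr.
    exact: (@final_contra _ _ _ _ hcM zy h2x hx).
Qed.

Set Implicit Arguments. Unset Strict Implicit.
Local Open Scope ring_scope.

Section Run.
Variables (R : realType) (d : nat).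

Lemma edist_sym (x y : 'rV[R]_d) : Defs.edist x y = Defs.edist y x.
Proof. rewrite /Defs.edist; congr Num.sqrt; apply: eq_bigr => i _; by rewrite -sqrrN opprB. Qed.

Lemma edist_xx (x : 'rV[R]_d) : Defs.edist x x = 0.
Proof. rewrite /Defs.edist big1 ?sqrtr0 // => i _; by rewrite subrr expr0n. Qed.

Lemma foldl_lt (cs : seq ('rV[R]_d)) (x : 'rV[R]_d) (s : seq nat) b :
  (b < size cs)%N -> all (fun j => j < size cs)%N s ->
  (foldl (fun best j => if (Defs.edist x (nth (0%R : 'rV[R]_d) cs j) < Defs.edist x (nth (0%R : 'rV[R]_d) cs best))%R then j else best) b s < size cs)%N.
Proof.
elim: s b => [|a s IH] b //= hb /andP[ha hs].
apply: IH => //; by case: ifP.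
Qed.

Lemma nearest_lt (cs : seq ('rV[R]_d)) x : cs != [::] -> (nearest cs x < size cs)%N.
Proof.
move=> hcs; rewrite /nearest; apply: foldl_lt.
  by case: cs hcs.
by apply/allP => k; rewrite mem_iota add0n.
Qed.

Variables (eps : R) (T : nat).

Definition isnew (st : state R d) (x : 'rV[R]_d) : bool :=
  all (fun c => eps < Defs.edist x c) (centers st).
Definition csn st x := if isnew st x then rcons (centers st) x else centers st.
Definition idx st x := if isnew st x then size (centers st) else nearest (centers st) x.
Definition cval st x (q : bool) := (lcur st (idx st x) + q)%N.
Definition lendb st x q : bool :=
  (1 + Num.sqrt ((T%:R / (size (csn st x))%:R) * (lprev st (idx st x))%:R) <= (cval st x q)%:R :> R).
Definition gendb (st : state R d) : bool :=
  (1 + Num.sqrt (T%:R * (gprev st)%:R) <= (gcur st).+1%:R :> R).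

Lemma stepE st x q : step eps T st x q =
  State (csn st x)
    (upd (lstage st) (idx st x) (lstage st (idx st x) + lendb st x q)%N)
    (upd (lcur st) (idx st x) (if lendb st x q then 0%N else cval st x q))
    (upd (lprev st) (idx st x) (if lendb st x q then (lprev st (idx st x) + cval st x q)%N else lprev st (idx st x)))
    (gstage st + gendb st)%N
    (if gendb st then 0%N else (gcur st).+1)
    (if gendb st then (gprev st + (gcur st).+1)%N else gprev st).
Proof. by []. Qed.

Lemma sep_step (X : set 'rV[R]_d) st x : 0 < eps -> X x ->
  eps_separated X eps (centers st) -> eps_separated X eps (csn st x).
Proof.
move=> e0 Xx [u [inX pw]]; rewrite /csn.
case hn: (isnew st x) => //.
move: hn; rewrite /isnew => /allP hall.
split; [|split].
- rewrite rcons_uniq u andbT; apply/negP => xin.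
  by have := hall x xin; rewrite edist_xx ltNge (ltW e0).
- by move=> y; rewrite mem_rcons in_cons => /orP[/eqP->|]; [|exact: inX].
- move=> y z; rewrite !mem_rcons !in_cons => /orP[/eqP->|yin] /orP[/eqP->|zin].
  + by rewrite eqxx.
  + by move=> _; exact: hall.
  + by move=> _; rewrite edist_sym; exact: hall.
  + exact: pw.
Qed.

Lemma csn_pos st x : (0 < size (csn st x))%N.
Proof.
rewrite /csn; case hn: (isnew st x); first by rewrite size_rcons.
move: hn; rewrite /isnew; by case: (centers st).
Qed.

Lemma idx_lt st x : (idx st x < size (csn st x))%N.
Proof.
rewrite /idx /csn; case hn: (isnew st x); first by rewrite size_rcons.
apply: nearest_lt; move: hn; rewrite /isnew; by case: (centers st).
Qed.

Lemma size_csn st x : (size (centers st) <= size (csn st x))%N.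
Proof. rewrite /csn; case: (isnew st x) => //; by rewrite size_rcons. Qed.

End Run.

Lemma cond_nat (R : realType) (y : R) (c : nat) : 0 <= y -> 1 + Num.sqrt y <= c%:R ->
  (0 < c)%N /\ y <= (c.-1 ^ 2)%N%:R.
Proof.
move=> y0 h.
have s0 := sqrtr_ge0 y.
have c1 : (1 : R) <= c%:R by lra.
have cpos : (0 < c)%N by rewrite -(ltr_nat R) ; lra.
split => //.
have hc : (c.-1)%:R = (c%:R - 1 : R) by rewrite -{2}(prednK cpos) -natr1 addrK.
rewrite natrX hc.
have hs : Num.sqrt y <= c%:R - 1 by lra.
rewrite -(sqr_sqrtr y0).
apply: lerXn2r => //; rewrite ?nnegrE //; lra.
Qed.

Lemma lend_nat (R : realType) (T m M L c : nat) : (0 < m)%N -> (m <= M)%N ->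
  1 + Num.sqrt ((T%:R / m%:R) * L%:R) <= c%:R :> R ->
  (0 < c)%N /\ (T * L <= c.-1 ^ 2 * M)%N.
Proof.
move=> m0 mM h.
have y0 : (0 : R) <= T%:R / m%:R * L%:R by apply: mulr_ge0 => //; apply: divr_ge0.
have [c0 hy] := @cond_nat _ _ _ y0 h.
split => //.
have mR : (0 : R) < m%:R by rewrite ltr0n.
have : (T * L)%:R <= ((c.-1 ^ 2) * m)%:R :> R.
  rewrite natrM [in leRHS]natrM.
  have -> : (T%:R * L%:R : R) = (T%:R / m%:R * L%:R) * m%:R.
    by rewrite mulrAC divfK // gt_eqF.
  by rewrite ler_pM2r.
rewrite ler_nat => h2.
apply: (leq_trans h2); by rewrite leq_mul2l mM orbT.
Qed.

Lemma sum_eq_ind (N i : nat) : (\sum_(u < N) (u == i :> nat) = (i < N))%N.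
Proof.
elim: N => [|N IH]; first by rewrite big_ord0.
rewrite big_ord_recr /= IH ltnS.
by case: (ltngtP i N).
Qed.

Section RunInv.
Variables (R : realType) (d : nat) (eps : R) (X : set 'rV[R]_d) (T j M : nat).
Hypotheses (e0 : 0 < eps) (Mcov : forall s, eps_separated X eps s -> (size s <= M)%N)
  (T0 : (0 < T)%N) (Tj : (T < 2 ^ (2 ^ j))%N).

Definition RI (st : state R d) (t : nat) : Prop :=
  eps_separated X eps (centers st) /\
  (forall u, (size (centers st) <= u)%N -> lstage st u = 1%N /\ lprev st u = 0%N /\ lcur st u = 0%N) /\
  (forall u, Inv T j M (lstage st u) (lprev st u)) /\
  (forall N, (\sum_(u < N) (lprev st u + lcur st u) <= t)%N) /\
  (gprev st + gcur st <= t)%N /\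
  Inv T j 1 (gstage st) (gprev st).

Lemma RI_init : RI (init_state R d) 0.
Proof.
split; first by split => //; split.
split; first by [].
split; first by move=> u; exact: Inv_init.
split; first by move=> N; rewrite big1.
split => //; exact: Inv_init.
Qed.

Lemma RI_step st t x q : X x -> RI st t -> RI (step eps T st x q) t.+1.
Proof.
move=> Xx [sep [out [inv [sum [gsum ginv]]]]].
rewrite stepE.
have sep' := sep_step e0 Xx sep.
have mM : (size (csn eps st x) <= M)%N := Mcov sep'.
have ilt := idx_lt eps st x.
have mpos := csn_pos eps st x.
set i := idx eps st x in ilt *.
set lend := lendb eps T st x q.
set c := cval eps st x q.
split => //=.
split.
  move=> u hu.
  have ui : (u == i) = false by apply/negbTE; rewrite neq_ltn (leq_trans ilt hu) orbT.
  rewrite /upd ui; apply: out; exact: leq_trans (size_csn eps st x) hu.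
split.
  move=> u; rewrite /upd; case: eqP => [_|_]; last exact: inv.
  case hl: lend; last by rewrite addn0; exact: inv.
  have [c0 hc] := @lend_nat R _ _ _ _ _ mpos mM hl.
  rewrite addn1; exact: (@Inv_step T j M _ _ _ (leq_trans mpos mM) T0 Tj c0 hc (inv i)).
split.
  move=> N.
  have e : forall u, (upd (lprev st) i (if lend then (lprev st i + c)%N else lprev st i) u +
        upd (lcur st) i (if lend then 0%N else c) u = (lprev st u + lcur st u) + (u == i) * q)%N.
    move=> u; rewrite /upd; case: eqP => [->|_]; last by rewrite mul0n addn0.
    rewrite /c /cval -/i mul1n; case: lend; lia.
  rewrite (eq_bigr (fun u : 'I_N => (lprev st u + lcur st u) + ((u : nat) == i) * q)%N); last by move=> u _; exact: e.
  rewrite big_split.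
  rewrite -big_distrl sum_eq_ind.
  have hq : (nat_of_bool (i < N)%N * q <= 1)%N by case: (i < N)%N; case: (q).
  rewrite -[t.+1]addn1; exact: leq_add (sum N) hq.
split.
  by case: (gendb T st) => /=; lia.
case hg: (gendb T st); last by rewrite addn0.
have y0 : (0 : R) <= T%:R * (gprev st)%:R by [].
have [c0 hc] := @cond_nat _ _ _ y0 hg.
rewrite addn1; apply: Inv_step => //.
by rewrite muln1 -(ler_nat R) natrM.
Qed.

Lemma RI_run (xs : nat -> 'rV[R]_d) (qs : nat -> bool) :
  (forall t, (t < T)%N -> X (xs t)) -> forall t, (t <= T)%N -> RI (run eps T xs qs t) t.
Proof.
move=> hX; elim=> [|t IH] ht; first exact: RI_init.
apply: RI_step; first exact: hX.
by apply: IH; exact: ltnW.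
Qed.

Lemma final_bounds (xs : nat -> 'rV[R]_d) (qs : nat -> bool) :
  (forall t, (t < T)%N -> X (xs t)) ->
  (total_local_stages eps T xs qs <= M * j.+4)%N /\ (global_stage eps T xs qs <= j.+4)%N.
Proof.
move=> hX.
have [sep [_ [inv [sum [gsum ginv]]]]] := RI_run qs hX (leqnn T).
rewrite /total_local_stages /global_stage.
set st := run eps T xs qs T in sep inv sum gsum ginv *.
split.
- have mM := Mcov sep.
  set m := size (centers st) in mM *.
  rewrite -(leq_pmul2r T0).
  have h1 : ((\sum_(u < m) lstage st u) * T <= \sum_(u < m) (j.+3 * T + M * lprev st u))%N.
    rewrite big_distrl; apply: leq_sum => u _; exact: @Inv_bound T j M _ _ (inv u).
  apply: (leq_trans h1).
  rewrite big_split sum_nat_const card_ord -big_distrr.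
  have h2 : (\sum_(u < m) lprev st u <= T)%N.
    apply: leq_trans (sum m); apply: leq_sum => u _; exact: leq_addr.
  have h3 : (m * (j.+3 * T) <= M * (j.+3 * T))%N by rewrite leq_mul2r mM orbT.
  have h4 : (M * \sum_(u < m) lprev st u <= M * T)%N by rewrite leq_mul2l h2 orbT.
  have := leq_add h3 h4.
  move=> h5; apply: (leq_trans h5).
  by rewrite -mulnDr -mulSnr mulnA.
- rewrite -(leq_pmul2r T0).
  have := @Inv_bound T j 1 _ _ ginv.
  rewrite mul1n => h; apply: (leq_trans h).
  have : (gprev st <= T)%N by lia.
  rewrite mulSnr; lia.
Qed.

End RunInv.

Section RL.
Variable R : realType.

Lemma expR_inv_bd (x : R) : expR x * (1 - x) <= 1.
Proof.
have h := expR_ge1Dx (- x). rewrite expRN in h.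
have e0 := expR_gt0 x.
have := ler_wpM2l (ltW e0) h.
by rewrite mulfV ?lt0r_neq0 // addrC.
Qed.

Lemma le_ln_of (x y : R) : 0 < y -> expR x <= y -> x <= ln y.
Proof.
move=> y0 h; rewrite -ler_expR lnK //; by rewrite posrE.
Qed.

Lemma sq_bd (a c : R) : 0 <= a -> a <= c -> a * a <= c * c.
Proof. move=> a0 ac; apply: ler_pM => //. Qed.

Lemma expR_1_bd : expR (1 : R) <= 296 / 100 /\ expR (1/2 : R) <= 172 / 100.
Proof.
have h8 := @expR_inv_bd (1/8).
have e8 : expR (1/8 : R) <= 8/7 by lra.
have e4 : expR (1/4 : R) <= 131/100.
  have -> : (1/4 : R) = 1/8 + 1/8 by lra.
  rewrite expRD. apply: (le_trans (sq_bd (expR_ge0 _) e8)). lra.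
have e2 : expR (1/2 : R) <= 172/100.
  have -> : (1/2 : R) = 1/4 + 1/4 by lra.
  rewrite expRD. apply: (le_trans (sq_bd (expR_ge0 _) e4)). lra.
split => //.
have -> : expR (1 : R) = expR (1/2) * expR (1/2) by rewrite -expRD; congr expR; lra.
apply: (le_trans (sq_bd (expR_ge0 _) e2)). lra.
Qed.

Lemma ln2_ge : 1/2 <= ln (2 : R).
Proof. apply: le_ln_of => //. have [_ h] := expR_1_bd. lra. Qed.

Lemma ln3_ge : 81/80 <= ln (3 : R).
Proof.
apply: le_ln_of => //.
have [h _] := expR_1_bd.
have h2 := @expR_inv_bd (1/80).
have -> : expR (81/80 : R) = expR 1 * expR (1/80) by rewrite -expRD; congr expR; lra.
have g0 := expR_gt0 (1/80 : R).
have g1 : expR (1/80 : R) <= 80/79 by lra.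
apply: le_trans (ler_pM (expR_ge0 _) (expR_ge0 _) h g1) _. lra.
Qed.

Lemma lnln_bound (T j : nat) : (3 <= T)%N -> (1 <= j)%N -> (2 ^ (2 ^ j.-1) <= T)%N ->
  (j + 4)%:R <= 1000%:R * ln (ln (T%:R : R)).
Proof.
move=> T3 j1 hT.
have T3R : (3 : R) <= T%:R by rewrite (ler_nat R 3 T).
have lnT : 81/80 <= ln (T%:R : R).
  apply: le_trans ln3_ge _. rewrite ler_ln ?posrE //; lra.
have d : 1/81 <= ln (ln (T%:R : R)).
  apply: le_ln_of; first lra.
  have h2 := @expR_inv_bd (1/81). lra.
case: (leqP j 7) => hj.
  have : (j + 4)%:R <= (11 : R) by rewrite (ler_nat R (j+4) 11); lia.
  lra.
set k := (2 ^ (j - 2))%N.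
have k0 : (0 < k)%N by rewrite expn_gt0.
have hk : (2 ^ (2 ^ j.-1) = 4 ^ k)%N.
  have -> : j.-1 = (j - 2).+1 by lia.
  by rewrite expnS expnM.
have TR : (4 : R) ^+ k <= T%:R.
  have := hT; rewrite hk -(ler_nat R) natrX => h; exact: h.
have lnTk : k%:R <= ln (T%:R : R).
  have ln4 : ln (4 : R) = ln 2 *+ 2 by rewrite -lnXn //; congr ln; lra.
  apply: le_trans (_ : ln ((4 : R) ^+ k) <= _).
    rewrite lnXn // ln4 -mulrnA -[ln 2 *+ _]mulr_natr natrM.
    have h2 := ln2_ge.
    have kR : (0 : R) <= k%:R by [].
    nra.
  rewrite ler_ln ?posrE //.
  lra.
have lnlnT : (j - 2)%:R / 2 <= ln (ln (T%:R : R)).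
  apply: le_trans (_ : ln (k%:R) <= _).
    rewrite /k natrX lnXn // -mulr_natl.
    have := ln2_ge => h2.
    have jR : (0 : R) <= (j - 2)%:R by [].
    nra.
  rewrite ler_ln ?posrE //; last lra.
  by rewrite ltr0n.
have : (j + 4)%:R <= 4 * ((j - 2)%:R / 2 : R).
  rewrite mulrA.
  have -> : (4 : R) * (j - 2)%:R = (4 * (j - 2))%:R by rewrite natrM.
  have : ((j + 4) <= 2 * (j - 2))%N by lia.
  rewrite -(ler_nat R) natrM => h.
  lra.
lra.
Qed.

End RL.

Import HBNNSimple.
Lemma exp_le_bound (R : realType) (dO : measure_display) (Omega : measurableType dO)
  (P : probability Omega R) (f : Omega -> R) (B : R) :
  (forall w, 0 <= f w) -> (forall w, f w <= B) -> ('E_P[f] <= B%:E)%E.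
Proof.
move=> f0 fB.
rewrite unlock ge0_integralTE; last by move=> x; rewrite lee_fin.
apply: ge_ereal_sup => _ [h /= hf <-].
rewrite -[sintegral _ _](_ : (\int[P]_x (h x)%:E)%E = _); last first.
  by rewrite integral_nnsfun // patch_setT.
apply: (@le_trans _ _ (\int[P]_(x in setT) (cst B%:E) x)%E).
  apply: ge0_le_integral => //.
  - by move=> x _; rewrite lee_fin.
  - by apply/measurable_EFinP.
  - by move=> x _; apply: le_trans (hf x) _; rewrite lee_fin.
rewrite integral_cst //.
apply: le_trans (_ : _ <= B%:E * 1)%E _; last by rewrite mule1.
have P1 : P [set: Omega]%classic = 1%E by exact: probability_setT.
move: P1 => /= ->. by [].
Qed.

Unset Implicit Arguments.

Theorem mainTheorem7 :
  exists C : nat,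
  forall (R : realType) (d : nat) (eps : R) (X : set 'rV[R]_d) (mmax : nat),
    0 < eps -> compact X -> is_max_cover_number X eps mmax ->
  forall (T : nat), (3 <= T)%N ->
  forall (dO : measure_display) (Omega : measurableType dO)
         (P : probability Omega R)
         (xs : Omega -> nat -> 'rV[R]_d) (qs : Omega -> nat -> bool),
    (forall w t, (t < T)%N -> X (xs w t)) ->
    ('E_P[fun w => (total_local_stages eps T (xs w) (qs w))%:R]
       <= (C%:R * mmax%:R * ln (ln T%:R))%:E)%E /\
    ('E_P[fun w => (global_stage eps T (xs w) (qs w))%:R]
       <= (C%:R * ln (ln T%:R))%:E)%E.
Proof.
exists 1000%N.
move=> R d eps X mmax e0 _ [_ Mcov] T T3 dO Omega P xs qs hX.
have T0 : (0 < T)%N by lia.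
have exj : exists j, (T < 2 ^ (2 ^ j))%N.
  exists T; apply: (leq_trans (ltn_expl T (ltnSn 1))).
  apply: leq_pexp2l => //; exact: ltnW (ltn_expl T (ltnSn 1)).
case: (ex_minnP exj) => j hj jmin.
have j1 : (1 <= j)%N.
  case: j hj jmin => // hj _; move: hj; rewrite expn0 expn1; lia.
have hT : (2 ^ (2 ^ j.-1) <= T)%N.
  case: (leqP (2 ^ (2 ^ j.-1)) T) => // hlt.
  have := jmin _ hlt; lia.
have L := lnln_bound R T3 j1 hT.
have L0 : (0 : R) <= ln (ln (T%:R)).
  have : (0 : R) <= (j + 4)%:R by []. lra.
have fb w := @final_bounds R d eps X T j mmax e0 Mcov T0 hj (xs w) (qs w) (hX w).
split; apply: exp_le_bound => w //.
- have [h _] := fb w.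
  rewrite -(ler_nat R) in h.
  apply: (le_trans h).
  rewrite natrM.
  have hm : (0 : R) <= mmax%:R by [].
  have ha : (j.+4%:R : R) <= 1000%:R * ln (ln T%:R) by rewrite -addn4.
  nra.
- have [_ h] := fb w.
  rewrite -(ler_nat R) in h.
  apply: (le_trans h).
  by rewrite -addn4.
Qed.
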